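(* Let $\mathbb P$ be atomless, $\Lambda\in\mathcal H_I$, and $\overline{\mathbb Q}=\sup_{\mathbb Q\in\mathcal P(\mathbb P,Y_1,Y_2)}\mathbb Q$ (setwise supremum). (i) If $Y_1=0$ and $Y_2$ is nonnegative with $1<\mathbb E^{\mathbb P}(Y_2)<\infty$, then $\overline{\mathbb Q}(A)=1\wedge\mathbb E^{\mathbb P}(Y_2\mathds 1_A)$ for all $A\in\mathcal F$ and $\sup_{\mathbb Q\in\mathcal P(\mathbb P,0,Y_2)}\Lambda\mathrm{VaR}^{\mathbb Q}=\Lambda\mathrm{VaR}^{\overline{\mathbb Q}}$. (ii) If $Y_1=k_1$ and $Y_2=k_2$ are constants with $0\le k_1<1<k_2$, then $\overline{\mathbb Q}(A)=g(\mathbb P(A))$ for all $A\in\mathcal F$ with $g(x)=(k_2x)\wedge(k_1x+1-k_1)$, $x\in[0,1]$, and $\sup_{\mathbb Q\in\mathcal P(\mathbb P,k_1,k_2)}\Lambda\mathrm{VaR}^{\mathbb Q}=(g^{-1}\circ\Lambda)\mathrm{VaR}^{\mathbb P}$.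
   Context: $\mathcal P(\mathbb P,Y_1,Y_2)=\{\mathbb Q\ll\mathbb P: Y_1\le\mathrm d\mathbb Q/\mathrm d\mathbb P\le Y_2\}$. For a capacity $w$ (monotone $w:\mathcal F\to[0,1]$, $w(\emptyset)=0,w(\Omega)=1$) and $\Lambda:\mathbb R\to[0,1]$, $\Lambda\mathrm{VaR}^w(X)=\inf\{x\in\mathbb R:w(X>x)\le\Lambda(x)\}$ ($\inf\emptyset=\infty$). $\mathcal H_I$: increasing functions $\mathbb R\to(0,1)$. In (ii), $g$ is continuous and strictly increasing on the set where $g<1$, and $g^{-1}:(0,1)\to(0,1)$ denotes the inverse there, so $g^{-1}\circ\Lambda$ is well defined. *)

(* Defs.v *)
From HB Require Import structures.
From mathcomp Require Import all_boot all_order all_algebra.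
From mathcomp Require Import all_classical all_reals all_analysis.
Set Implicit Arguments. Unset Strict Implicit. Unset Printing Implicit Defensive.
Import Order.TTheory GRing.Theory Num.Theory.
Local Open Scope classical_set_scope.
Local Open Scope ring_scope.
Local Open Scope ereal_scope.

Definition atomless d (T : measurableType d) (R : realType)
  (P : probability T R) : Prop :=
  forall A : set T, measurable A -> 0 < P A ->
    exists B : set T, [/\ measurable B, B `<=` A, 0 < P B & P B < P A].

Definition Pset d (T : measurableType d) (R : realType)
  (P : probability T R) (Y1 Y2 : T -> R) : set (probability T R) :=
  [set Q : probability T R | exists f : T -> R,
     [/\ measurable_fun setT f,
         {ae P, forall x, (Y1 x <= f x <= Y2 x)%R} &
         forall A, measurable A -> Q A = \int[P]_(x in A) (f x)%:E]].

Definition Qbar d (T : measurableType d) (R : realType)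
  (P : probability T R) (Y1 Y2 : T -> R) : set T -> \bar R :=
  fun A => ereal_sup [set (Q : set T -> \bar R) A | Q in Pset P Y1 Y2].

(* Lambda VaR^w (X) = inf { x in R : w(X > x) <= Lambda(x) }, inf of empty = +oo *)
Definition LVaR (T : Type) (R : realType) (Lam : R -> R) (w : set T -> \bar R)
  (X : T -> R) : \bar R :=
  ereal_inf [set x%:E | x in [set x : R | w [set t | (x < X t)%R] <= (Lam x)%:E]].

(* Main.v *)
Require Import Defs.
From HB Require Import structures.
From mathcomp Require Import all_boot all_order all_algebra.
From mathcomp Require Import all_classical all_reals all_analysis.
From mathcomp Require Import measurable_realfun lra.
Import Order.TTheory GRing.Theory Num.Theory.
Local Open Scope classical_set_scope.
Local Open Scope ring_scope.
Local Open Scope ereal_scope.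

Section dens.
Context d (T : measurableType d) (R : realType) (P : probability T R) (f : T -> R).
Hypothesis mf : measurable_fun setT f.
Hypothesis f0 : forall t, (0 <= f t)%R.
Hypothesis f1 : \int[P]_t (f t)%:E = 1.

Definition densm (A : set T) := \int[P]_(t in A) (f t)%:E.

Let densm0 : densm set0 = 0. Proof. by rewrite /densm integral_set0. Qed.
Let densm_ge0 A : 0 <= densm A.
Proof. by apply: integral_ge0 => t _; rewrite lee_fin. Qed.
Let densm_sa : semi_sigma_additive densm.
Proof.
apply: semi_sigma_additive_nng_induced => //.
exact/measurable_realfun.measurable_EFinP.
Qed.
HB.instance Definition _ := isMeasure.Build _ _ _ densm densm0 densm_ge0 densm_sa.
Let densmT : densm setT = 1. Proof. exact: f1. Qed.
HB.instance Definition _ := @Measure_isProbability.Build _ _ R densm densmT.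

Lemma dens_exists : exists Q : probability T R,
  forall A, measurable A -> Q A = \int[P]_(t in A) (f t)%:E.
Proof. by exists densm. Qed.
End dens.

Section two_piece.
Context d (T : measurableType d) (R : realType) (P : probability T R).

Lemma two_piece (h : T -> R) (mh : measurable_fun setT h)
  (h0 : forall t, (0 <= h t)%R) (A : set T) (mA : measurable A) (a b iA iAc : R)
  (a0 : (0 <= a)%R) (b0 : (0 <= b)%R)
  (hA : \int[P]_(t in A) (h t)%:E = iA%:E)
  (hAc : \int[P]_(t in ~` A) (h t)%:E = iAc%:E)
  (H : (a * iA + b * iAc = 1)%R) :
  exists Q : probability T R, exists f : T -> R,
    [/\ measurable_fun setT f, (forall t, A t -> f t = (a * h t)%R),
       (forall t, ~ A t -> f t = (b * h t)%R),
       (forall B, measurable B -> Q B = \int[P]_(t in B) (f t)%:E)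
     & Q A = (a * iA)%:E].
Proof.
set f := fun t => ((a * \1_A t + b * \1_(~` A) t) * h t)%R.
have mf : measurable_fun setT f.
  apply: measurable_realfun.measurable_funM => //.
  apply: measurable_realfun.measurable_funD => //;
    apply: measurable_realfun.measurable_funM => //;
    apply: measurable_realfun.measurable_indic => //; exact: measurableC.
have fA t : A t -> f t = (a * h t)%R.
  by move=> At; rewrite /f !indicE mem_set // memNset //= ?mulr1 ?mulr0 ?addr0.
have fAc t : ~ A t -> f t = (b * h t)%R.
  by move=> At; rewrite /f !indicE memNset // (mem_set (At : (~` A) t)) mulr0 mulr1 add0r.
have f0 t : (0 <= f t)%R.
  have [At|At] := pselect (A t).
    by rewrite fA // mulr_ge0.
  by rewrite fAc // mulr_ge0.
have mEh : measurable_fun [set: T] (EFin \o h).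

  exact/measurable_realfun.measurable_EFinP.
have IA : \int[P]_(t in A) (f t)%:E = (a * iA)%:E.
  rewrite (eq_integral (fun t => a%:E * (h t)%:E)); last first.
    by move=> t; rewrite inE => At; rewrite fA.
  rewrite ge0_integralZl //; last 2 first.
  - exact: measurable_funS mEh.
  - by move=> t _; rewrite lee_fin.
  by rewrite hA.
have IAc : \int[P]_(t in ~` A) (f t)%:E = (b * iAc)%:E.
  rewrite (eq_integral (fun t => b%:E * (h t)%:E)); last first.
    by move=> t; rewrite inE => At; rewrite fAc.
  rewrite ge0_integralZl //; last 3 first.
  - exact: measurableC.
  - exact: measurable_funS mEh.
  - by move=> t _; rewrite lee_fin.
  by rewrite hAc.
have mEf : measurable_fun setT (fun t => (f t)%:E).
  exact/measurable_realfun.measurable_EFinP.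
have f1 : \int[P]_t (f t)%:E = 1.
  rewrite -(setUv A) ge0_integral_setU //; last 4 first.
  - exact: measurableC.
  - by rewrite setUv.
  - by move=> t _; rewrite lee_fin.
  - by apply/disj_setPS => t []...
  by rewrite IA IAc -EFinD H.
have [Q HQ] := @dens_exists _ _ _ P f mf f0 f1.
exists Q, f; split => //.
by rewrite HQ.
Qed.
End two_piece.

Section bounds.
Context d (T : measurableType d) (R : realType) (P : probability T R).

Lemma Pset_bounds (Y1 Y2 : T -> R) (mY1 : measurable_fun setT Y1)
  (mY2 : measurable_fun setT Y2) (Y10 : forall t, (0 <= Y1 t)%R)
  (Y20 : forall t, (0 <= Y2 t)%R)
  (Q : probability T R) : Pset P Y1 Y2 Q -> forall A, measurable A ->
  \int[P]_(t in A) (Y1 t)%:E <= Q A /\ Q A <= \int[P]_(t in A) (Y2 t)%:E.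
Proof.
move=> [f [mf ae HQ]] A mA; rewrite HQ //.
have mEf : measurable_fun setT (EFin \o f) by exact/measurable_EFinP.
have mF : measurable_fun setT (fun t => maxe (f t)%:E 0).
  exact: measurable_maxe.
have E : \int[P]_(t in A) (f t)%:E = \int[P]_(t in A) maxe (f t)%:E 0.
  apply: ae_eq_integral => //.
  - exact: measurable_funS mEf.
  - exact: measurable_funS mF.
  apply: filterS ae => t /andP[h1 h2] _.
  by rewrite max_l // lee_fin (le_trans (Y10 t)).
have F0 t : A t -> 0 <= maxe (f t)%:E 0 by move=> _; rewrite le_max lexx orbT.
have mEY1 : measurable_fun setT (EFin \o Y1) by exact/measurable_EFinP.
have mEY2 : measurable_fun setT (EFin \o Y2) by exact/measurable_EFinP.
rewrite E; split.
- apply: ae_ge0_le_integral => //.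
  + by move=> t _; rewrite lee_fin.
  + exact: measurable_funS mEY1.
  + exact: measurable_funS mF.
  apply: filterS ae => t /andP[h1 h2] _.
  by rewrite le_max lee_fin h1.
- apply: ae_ge0_le_integral => //.
  + exact: measurable_funS mF.
  + by move=> t _; rewrite lee_fin; exact: Y20.
  + exact: measurable_funS mEY2.
  apply: filterS ae => t /andP[h1 h2] _.
  by rewrite ge_max !lee_fin h2 Y20.
Qed.
End bounds.

Lemma ereal_le_of_lt (R : realType) (v s : \bar R) :
  (forall x : R, x%:E < v -> x%:E <= s) -> v <= s.
Proof.
case: v => [v| |] H; last exact: leNye.
- case: s H => [s| |] H; last 2 first.
  + exact: leey.
  + have := H (v - 1)%R; rewrite lte_fin => /(_ ltac:(lra)).
    by rewrite leeNy_eq.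
  rewrite lee_fin leNgt; apply/negP => sv.
  have := H ((s + v) / 2)%R; rewrite !lte_fin !lee_fin => /(_ ltac:(lra)).
  lra.
- case: s H => [s| |] H; last 2 first.
  + exact: leey.
  + by have := H 0%R; rewrite ltry leeNy_eq => /(_ erefl).
  exfalso; have := H (s + 1)%R; rewrite ltry lee_fin => /(_ erefl); lra.
Qed.

Section supL.
Context d (T : measurableType d) (R : realType).

Lemma mes_gt (X : T -> R) (mX : measurable_fun setT X) (x : R) :
  measurable [set t | (x < X t)%R].
Proof.
have := mX measurableT _ (@measurable_itv R `]x, +oo[).
rewrite setTI; congr measurable; apply/seteqP; split => t /=;
  by rewrite in_itv /= andbT.
Qed.

Lemma sup_LVaR (Lam : R -> R) (hLam : {homo Lam : x y / (x <= y)%R})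
  (S : set (probability T R)) (w : set T -> \bar R) (X : T -> R)
  (mX : measurable_fun setT X) :
  (forall Q, S Q -> forall A, Q A <= w A) ->
  (forall x0 : R, exists Q, S Q /\
     Q [set t | (x0 < X t)%R] = w [set t | (x0 < X t)%R]) ->
  ereal_sup [set LVaR Lam (Q : set T -> \bar R) X | Q in S] = LVaR Lam w X.
Proof.
move=> Hle Hatt; apply/eqP; rewrite eq_le; apply/andP; split.
  apply: ge_ereal_sup => _ [Q SQ <-].
  apply: le_ereal_inf => _ [y Hy <-]; exists y => //=.
  exact: le_trans (Hle _ SQ _) Hy.
apply: ereal_le_of_lt => x0 x0v.
have [Q [SQ HQ]] := Hatt x0.
apply: le_ereal_sup_tmp; exists (LVaR Lam (Q : set T -> \bar R) X); first by exists Q.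
apply: le_ereal_inf_tmp => _ [x Hx <-]; rewrite lee_fin leNgt; apply/negP => xx0.
have wgt : (Lam x0)%:E < w [set t | (x0 < X t)%R].
  rewrite ltNge; apply/negP => wle.
  have : LVaR Lam w X <= x0%:E by apply: ge_ereal_inf; exists x0%:E => //; exists x0.
  by rewrite leNgt x0v.
have : Q [set t | (x0 < X t)%R] <= Q [set t | (x < X t)%R].
  apply: le_measure; rewrite ?inE; try exact: mes_gt.
  by move=> t /= h; exact: lt_trans h.
rewrite HQ => h1.
have h2 := le_trans h1 Hx.
have := lt_le_trans wgt h2; rewrite lte_fin.
have := hLam _ _ (ltW xx0); rewrite leNgt => /negP; exact.
Qed.
End supL.

Section splitint.
Context d (T : measurableType d) (R : realType) (P : probability T R).

Lemma split_int (h : T -> R) (mh : measurable_fun setT h)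
  (h0 : forall t, (0 <= h t)%R) (I : R) (hI : \int[P]_t (h t)%:E = I%:E)
  (A : set T) (mA : measurable A) :
  exists iA iAc : R, [/\ \int[P]_(t in A) (h t)%:E = iA%:E,
     \int[P]_(t in ~` A) (h t)%:E = iAc%:E, (iA + iAc = I)%R,
     (0 <= iA)%R & (0 <= iAc)%R].
Proof.
have mEh : measurable_fun setT (EFin \o h) by exact/measurable_EFinP.
have hs : \int[P]_t (h t)%:E =
    \int[P]_(t in A) (h t)%:E + \int[P]_(t in ~` A) (h t)%:E.
  rewrite -{1}(setUv A) ge0_integral_setU //; last 4 first.
  - exact: measurableC.
  - by rewrite setUv.
  - by move=> t _; rewrite lee_fin.
  - by apply/disj_setPS => t [].
have u0 : 0 <= \int[P]_(t in A) (h t)%:E.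
  by apply: integral_ge0 => t _; rewrite lee_fin.
have v0 : 0 <= \int[P]_(t in ~` A) (h t)%:E.
  by apply: integral_ge0 => t _; rewrite lee_fin.
move: hs u0 v0; rewrite hI.
move: (\int[P]_(t in A) (h t)%:E) (\int[P]_(t in ~` A) (h t)%:E).
case=> [u| |]; case=> [v| |] //=.
- move=> [->] u0 v0; exists u, v; split => //; by rewrite -lee_fin.
Qed.
End splitint.

Section generic.
Context d (T : measurableType d) (R : realType) (P : probability T R).

Lemma generic_thm (Y1 Y2 : T -> R) (m : set T -> \bar R)
  (core : forall A, measurable A ->
     (forall Q, Pset P Y1 Y2 Q -> Q A <= m A) /\
     exists Q, Pset P Y1 Y2 Q /\ Q A = m A)
  (Lam : R -> R) (hLam : {homo Lam : x y / (x <= y)%R}) :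
  (forall A, measurable A -> Qbar P Y1 Y2 A = m A) /\
  (forall X, measurable_fun setT X ->
     ereal_sup [set LVaR Lam (Q : set T -> \bar R) X | Q in Pset P Y1 Y2]
     = LVaR Lam (Qbar P Y1 Y2) X).
Proof.
have HQb : forall A, measurable A -> Qbar P Y1 Y2 A = m A.
  move=> A mA; have [ub [Q [HQ QA]]] := core A mA.
  apply/eqP; rewrite eq_le; apply/andP; split.
    by apply: ge_ereal_sup => _ [Q' HQ' <-]; exact: ub.
  by apply: le_ereal_sup_tmp; exists (Q A) => //; [exists Q | rewrite QA].
split => // X mX.
apply: sup_LVaR => //.
  by move=> Q HQ A; apply: ereal_sup_ubound; exists Q.
move=> x0; have mA := @mes_gt _ _ _ X mX x0.
have [_ [Q [HQ QA]]] := core _ mA.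
by exists Q; split => //; rewrite HQb.
Qed.
End generic.

Section greal.
Context (R : realType).

Lemma min_cases (a b : R) :
  (Num.min a b = a /\ (a <= b)%R) \/ (Num.min a b = b /\ (b <= a)%R).
Proof.
have [h|h] := leP a b.
  by left; split => //; apply/min_idPl.
right; split; last exact: ltW.
by rewrite /Order.min.
Qed.

Lemma g_equiv (k1 k2 : R) (ginv : R -> R) (p y : R) :
  (0 <= k1 < 1)%R -> (1 < k2)%R ->
  (forall y : R, (0 < y < 1)%R -> (0 <= ginv y <= 1)%R /\
     Num.min (k2 * ginv y)%R (k1 * ginv y + 1 - k1)%R = y) ->
  (0 <= p <= 1)%R -> (0 < y < 1)%R ->
  (Num.min (k2 * p)%R (k1 * p + 1 - k1)%R <= y)%R = (p <= ginv y)%R.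
Proof.
move=> /andP[k10 k11] k21 hg /andP[p0 p1] hy.
have [/andP[z0 z1] gz] := hg y hy.
move: (ginv y) z0 z1 gz => z z0 z1 gz.
apply/idP/idP.
- move=> gp; rewrite leNgt; apply/negP => zp.
  have h2 : (0 < k2 * (p - z))%R by apply: mulr_gt0; lra.
  have h1 : (0 <= k1 * (p - z))%R by apply: mulr_ge0; lra.
  move: hy => /andP[y0 y1].
  have [k1E|k1p] := eqVneq k1 0%R.
    subst k1.
    case: (min_cases (k2 * p) (0 * p + 1 - 0)) => [[e1 c1]|[e1 c1]];
    case: (min_cases (k2 * z) (0 * z + 1 - 0)) => [[e2 c2]|[e2 c2]];
    rewrite e1 in gp; rewrite e2 in gz; nra.
  have h3 : (0 < k1 * (p - z))%R.
    apply: mulr_gt0; last lra.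
    by rewrite lt_neqAle eq_sym k1p k10.
  case: (min_cases (k2 * p) (k1 * p + 1 - k1)) => [[e1 c1]|[e1 c1]];
  case: (min_cases (k2 * z) (k1 * z + 1 - k1)) => [[e2 c2]|[e2 c2]];
  rewrite e1 in gp; rewrite e2 in gz; nra.
- move=> pz.
  have h2 : (0 <= k2 * (z - p))%R by apply: mulr_ge0; lra.
  have h1 : (0 <= k1 * (z - p))%R by apply: mulr_ge0; lra.
  case: (min_cases (k2 * p) (k1 * p + 1 - k1)) => [[e1 c1]|[e1 c1]];
  case: (min_cases (k2 * z) (k1 * z + 1 - k1)) => [[e2 c2]|[e2 c2]];
  rewrite e1; rewrite e2 in gz; nra.
Qed.
End greal.

Section cores.
Context d (T : measurableType d) (R : realType) (P : probability T R).

Lemma core_i (Y2 : T -> R) (mY2 : measurable_fun setT Y2)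
  (Y20 : forall t, (0 <= Y2 t)%R) (I : R)
  (hI : \int[P]_t (Y2 t)%:E = I%:E) (I1 : (1 < I)%R) (A : set T)
  (mA : measurable A) :
  (forall Q, Pset P (fun=> 0%R) Y2 Q -> Q A <= mine 1 (\int[P]_(t in A) (Y2 t)%:E)) /\
  exists Q, Pset P (fun=> 0%R) Y2 Q /\ Q A = mine 1 (\int[P]_(t in A) (Y2 t)%:E).
Proof.
have [iA [iAc [hA hAc hsum iA0 iAc0]]] := @split_int _ _ _ P Y2 mY2 Y20 I hI A mA.
rewrite hA; split.
  move=> Q HQ.
  have [_ ub] := @Pset_bounds _ _ _ P (fun=> 0%R) Y2 (measurable_cst _) mY2
    (fun=> lexx 0%R) Y20 Q HQ A mA.
  rewrite le_min; apply/andP; split; first exact: probability_le1.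
  by rewrite -hA.
have [iA1|iA1] := leP 1%R iA.
  have iApos : (0 < iA)%R by lra.
  set a := (iA^-1)%R.
  have a0 : (0 <= a)%R by rewrite invr_ge0 ltW.
  have a1 : (a <= 1)%R by rewrite invf_le1.
  have aiA : (a * iA = 1)%R by rewrite mulVf // gt_eqF.
  have H : (a * iA + 0 * iAc = 1)%R by rewrite mul0r addr0.
  have [Q [f [mf fA fAc HQ QA]]] :=
    @two_piece _ _ _ P Y2 mY2 Y20 A mA a 0%R iA iAc a0 (lexx 0%R) hA hAc H.
  exists Q; split.
    exists f; split => //.
    apply: aeW => t /=.
    have := Y20 t => y0.
    have [At|At] := pselect (A t).
      rewrite fA //; apply/andP; split; nra.
    rewrite fAc //; apply/andP; split; nra.
  rewrite QA aiA; apply/esym/min_idPl; by rewrite lee_fin.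
have iAcpos : (0 < iAc)%R by lra.
set b := ((1 - iA) / iAc)%R.
have hb : (b * iAc = 1 - iA)%R by rewrite /b divfK // gt_eqF.
have b0 : (0 <= b)%R by rewrite /b divr_ge0 //; lra.
have b1 : (b <= 1)%R by nra.
have H : (1 * iA + b * iAc = 1)%R by rewrite hb; lra.
have [Q [f [mf fA fAc HQ QA]]] :=
  @two_piece _ _ _ P Y2 mY2 Y20 A mA 1%R b iA iAc ler01 b0 hA hAc H.
exists Q; split.
  exists f; split => //.
  apply: aeW => t /=.
  have := Y20 t => y0.
  have [At|At] := pselect (A t).
    rewrite fA //; apply/andP; split; nra.
  rewrite fAc //; apply/andP; split; nra.
rewrite QA mul1r; apply/esym/min_idPr; rewrite lee_fin; exact: ltW.
Qed.
End cores.

Section cores2.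
Context d (T : measurableType d) (R : realType) (P : probability T R).

Lemma int_cst (k : R) (B : set T) : measurable B ->
  \int[P]_(t in B) ((fun=> k) t)%:E = (k * fine (P B))%:E.
Proof.
move=> mB; have := @integral_cst _ _ _ P B mB k%:E; rewrite /cst => ->.
by rewrite EFinM fineK // fin_num_measure.
Qed.

Lemma PE (B : set T) : measurable B -> P B = (fine (P B))%:E.
Proof. by move=> mB; rewrite fineK // fin_num_measure. Qed.

Lemma core_ii (k1 k2 : R) (hk1 : (0 <= k1 < 1)%R) (hk2 : (1 < k2)%R)
  (A : set T) (mA : measurable A) :
  (forall Q, Pset P (fun=> k1) (fun=> k2) Q ->
     Q A <= (Num.min (k2 * fine (P A))%R (k1 * fine (P A) + 1 - k1)%R)%:E) /\
  exists Q, Pset P (fun=> k1) (fun=> k2) Q /\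
     Q A = (Num.min (k2 * fine (P A))%R (k1 * fine (P A) + 1 - k1)%R)%:E.
Proof.
move: hk1 => /andP[k10 k11].
have mAc : measurable (~` A) by exact: measurableC.
set p := fine (P A).
have hPA : P A = p%:E by exact: PE.
have p0 : (0 <= p)%R by rewrite -lee_fin -hPA.
have p1 : (p <= 1)%R by rewrite -lee_fin -hPA probability_le1.
have hPAc : fine (P (~` A)) = (1 - p)%R.
  by rewrite probability_setC // hPA.
split.
  move=> Q HQ.
  have [_ ub] := @Pset_bounds _ _ _ P (fun=> k1) (fun=> k2) (measurable_cst _)
    (measurable_cst _) (fun=> k10) (fun=> ltW (lt_trans ltr01 hk2)) Q HQ A mA.
  have [lb _] := @Pset_bounds _ _ _ P (fun=> k1) (fun=> k2) (measurable_cst _)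
    (measurable_cst _) (fun=> k10) (fun=> ltW (lt_trans ltr01 hk2)) Q HQ _ mAc.
  set q := fine (Q A).
  have hQA : Q A = q%:E by rewrite /q fineK // fin_num_measure.
  rewrite int_cst // -/p hQA lee_fin in ub.
  rewrite int_cst // hPAc probability_setC // hQA -EFinB lee_fin in lb.
  rewrite hQA lee_fin.
  case: (@min_cases R (k2 * p)%R (k1 * p + 1 - k1)%R) => [[-> c]|[-> c]]; nra.
have mh : measurable_fun setT (fun _ : T => (1%R : R)) by exact: measurable_cst.
have hA : \int[P]_(t in A) ((fun _ : T => (1%R : R)) t)%:E = p%:E.
  by rewrite (int_cst 1%R A mA) mul1r.
have hAc : \int[P]_(t in ~` A) ((fun _ : T => (1%R : R)) t)%:E = (1 - p)%:E.
  by rewrite (int_cst 1%R (~` A) mAc) mul1r hPAc.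
have [c|c] := leP (k2 * p)%R (k1 * p + 1 - k1)%R.
  have p1' : (p < 1)%R by nra.
  set b := ((1 - k2 * p) / (1 - p))%R.
  have hb : (b * (1 - p) = 1 - k2 * p)%R by rewrite /b divfK // gt_eqF // subr_gt0.
  have H : (k2 * p + b * (1 - p) = 1)%R by rewrite hb; lra.
  have b1 : (k1 <= b)%R by nra.
  have b2 : (b <= k2)%R by nra.
  have [Q [f [mf fA fAc HQ QA]]] := @two_piece _ _ _ P _ mh (fun=> ler01) A mA k2 b p (1 - p)
    (ltW (lt_trans ltr01 hk2)) (le_trans k10 b1) hA hAc H.
  exists Q; split.
    exists f; split => //.
    apply: aeW => t /=.
    have [At|At] := pselect (A t).
      rewrite fA // mulr1; apply/andP; split; lra.
    rewrite fAc // mulr1; apply/andP; split; lra.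
  by rewrite QA.
have pp : (0 < p)%R by nra.
set a := ((1 - k1 + k1 * p) / p)%R.
have ha : (a * p = 1 - k1 + k1 * p)%R by rewrite /a divfK // gt_eqF.
have H : (a * p + k1 * (1 - p) = 1)%R by rewrite ha; lra.
have a1 : (k1 <= a)%R by nra.
have a2 : (a <= k2)%R by nra.
have [Q [f [mf fA fAc HQ QA]]] := @two_piece _ _ _ P _ mh (fun=> ler01) A mA a k1 p (1 - p)
  (le_trans k10 a1) k10 hA hAc H.
exists Q; split.
  exists f; split => //.
  apply: aeW => t /=.
  have [At|At] := pselect (A t).
    rewrite fA // mulr1; apply/andP; split; lra.
  rewrite fAc // mulr1; apply/andP; split; lra.
rewrite QA ha; congr EFin; lra.
Qed.
End cores2.

Theorem mainTheorem9 (d : measure_display) (T : measurableType d) (R : realType)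
  (P : probability T R) (Lam : R -> R) :
  atomless P ->
  {homo Lam : x y / (x <= y)%R} ->
  (forall x, (0 < Lam x < 1)%R) ->
  (* (i) *)
  (forall Y2 : T -> R, measurable_fun setT Y2 -> (forall t, (0 <= Y2 t)%R) ->
     1 < \int[P]_t (Y2 t)%:E < +oo ->
     (forall A : set T, measurable A ->
        Qbar P (fun=> 0%R) Y2 A = mine 1 (\int[P]_(t in A) (Y2 t)%:E)) /\
     (forall X : T -> R, measurable_fun setT X ->
        ereal_sup [set LVaR Lam (Q : set T -> \bar R) X | Q in Pset P (fun=> 0%R) Y2]
        = LVaR Lam (Qbar P (fun=> 0%R) Y2) X)) /\
  (* (ii) *)
  (forall (k1 k2 : R) (ginv : R -> R),
     (0 <= k1 < 1)%R -> (1 < k2)%R ->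
     let g := fun x : R => Num.min (k2 * x)%R (k1 * x + 1 - k1)%R in
     (* ginv is the inverse of g on the set {x in [0,1] | g x < 1} *)
     (forall y : R, (0 < y < 1)%R -> (0 <= ginv y <= 1)%R /\ g (ginv y) = y) ->
     (forall A : set T, measurable A ->
        Qbar P (fun=> k1) (fun=> k2) A = (g (fine (P A)))%:E) /\
     (forall X : T -> R, measurable_fun setT X ->
        ereal_sup [set LVaR Lam (Q : set T -> \bar R) X | Q in Pset P (fun=> k1) (fun=> k2)]
        = LVaR (ginv \o Lam) (P : set T -> \bar R) X)).
Proof.
move=> _ hLam hLam01; split.
  move=> Y2 mY2 Y20 /andP[].
  case E : (\int[P]_t (Y2 t)%:E) => [I| |] //; rewrite lte_fin => I1 _.
  apply: (@generic_thm _ _ _ P (fun=> 0%R) Y2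
    (fun A => mine 1 (\int[P]_(t in A) (Y2 t)%:E))) => // A mA.
  exact: (@core_i _ _ _ P Y2 mY2 Y20 I E I1 A mA).
move=> k1 k2 ginv hk1 hk2 g hg.
have [HQ HS] := @generic_thm _ _ _ P (fun=> k1) (fun=> k2)
  (fun A => (g (fine (P A)))%:E)
  (fun A mA => @core_ii _ _ _ P k1 k2 hk1 hk2 A mA) Lam hLam.
split => // X mX; rewrite (HS _ mX) /LVaR.
have key x : (Qbar P (fun=> k1) (fun=> k2) [set t | (x < X t)%R] <= (Lam x)%:E)
    = (P [set t | (x < X t)%R] <= ((ginv \o Lam) x)%:E).
  have mS := @mes_gt _ _ _ X mX x.
  rewrite HQ // [in RHS](@PE _ _ _ P _ mS) !lee_fin /g /= (@g_equiv R k1 k2 ginv) //.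
  apply/andP; split; first exact: fine_ge0 (measure_ge0 _ _).
  by rewrite -lee_fin -(@PE _ _ _ P _ mS) probability_le1.
apply: congr1; apply/seteqP; split => _ [x hx <-]; exists x => //=.
  by rewrite -key.
by rewrite key.
Qed.
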